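(* Consider the discrete-time $Geo^X/G_r^{(a,b)}/1$ queue with single ($\delta=0$) or multiple ($\delta=1$) vacations described in the context, with $\rho<1$. Let $P^+(x)=\sum_{n\ge0}p^+_nx^n$ be the pgf of the queue length at service completion epochs. Then for all complex $x$ with $|x|\le1$ and $x^b\ne K^{(b)}(x)$, $$P^+(x)=\frac{\begin{aligned}&\sum_{n=0}^{a-1}p^+_nx^n\{H(x)-1\}K^{(b)}(x)+\sum_{n=0}^{a-1}Q^+_n\Big[x^n\{\delta H(x)-1\}K^{(b)}(x)\\&\quad+x^b(1-\delta)\sum_{j=n}^{a-1}e_{j,n}\Big(\sum_{i=a}^bg_{i-j}K^{(i)}(x)+\sum_{i=b+1-j}^\infty g_ix^{i+j-b}K^{(b)}(x)\Big)\Big]\\&\quad+\sum_{n=a}^{b-1}(p^+_n+Q^+_n)\{x^bK^{(n)}(x)-x^nK^{(b)}(x)\}\end{aligned}}{x^b-K^{(b)}(x)}.$$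
   Context: Time is slotted. Fix integers $1\le a\le b$, $\lambda\in(0,1)$, $\bar\lambda=1-\lambda$, and a group-size distribution $(g_m)_{m\ge1}$ with finite mean $\bar g$ and pgf $G(z)=\sum_{m\ge1}g_mz^m$; $g_m=0$ for $m\le0$. In each slot a group arrives with probability $\lambda$, with size distribution $(g_m)$. Service follows the $(a,b)$ bulk rule (start only if at least $a$ wait; take all if $a\le r\le b$ wait, exactly $b$ if more than $b$ wait). A batch of size $r$ ($a\le r\le b$) has service-time pmf $s_r(n)$, $n\ge1$, pgf $S_r^*(z)$, mean $s_r$, $\mu_b=1/s_b$. Vacation times have pmf $v_n$, $n\ge1$, pgf $V^*(z)$, finite mean. $\delta=0$: single vacation (server stays dormant after a vacation until $a$ wait); $\delta=1$: multiple vacations. $\rho=\lambda\bar g/(b\mu_b)<1$. Stationary probabilities $p_{n,0}$ ($0\le n\le a-1$, dormant), $p_{n,r}(u)$ ($n\ge0$ waiting, batch size $a\le r\le b$ in service, remaining service $u\ge1$), $Q_n(u)$ ($n\ge0$ waiting, on vacation, remaining vacation $u\ge1$) satisfy: (E1) $p_{0,0}=(1-\delta)[\bar\lambda p_{0,0}+\bar\lambda Q_0(1)]$; (E2) $p_{n,0}=(1-\delta)[\bar\lambda p_{n,0}+\lambda\sum_{i=1}^ng_ip_{n-i,0}+\bar\lambda Q_n(1)+\lambda\sum_{i=1}^ng_iQ_{n-i}(1)]$, $1\le n\le a-1$; (E3) $p_{0,r}(u)=\bar\lambda p_{0,r}(u+1)+s_r(u)\big[\sum_{m=a}^b(\bar\lambda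 p_{r,m}(1)+\lambda\sum_{i=1}^rg_ip_{r-i,m}(1))+\bar\lambda Q_r(1)+\lambda\sum_{i=1}^rg_iQ_{r-i}(1)+(1-\delta)\lambda\sum_{i=0}^{a-1}g_{r-i}p_{i,0}\big]$, $a\le r\le b$; (E4) $p_{n,r}(u)=\bar\lambda p_{n,r}(u+1)+\lambda\sum_{i=1}^ng_ip_{n-i,r}(u+1)$, $n\ge1$, $a\le r\le b-1$; (E5) $p_{n,b}(u)=\bar\lambda p_{n,b}(u+1)+\lambda\sum_{i=1}^ng_ip_{n-i,b}(u+1)+s_b(u)\big[\sum_{m=a}^b(\bar\lambda p_{n+b,m}(1)+\lambda\sum_{i=1}^{n+b}g_ip_{n+b-i,m}(1))+\bar\lambda Q_{n+b}(1)+\lambda\sum_{i=1}^{n+b}g_iQ_{n+b-i}(1)+(1-\delta)\lambda\sum_{i=0}^{a-1}g_{n+b-i}p_{i,0}\big]$, $n\ge1$; (E6) $Q_0(u)=\bar\lambda Q_0(u+1)+\bar\lambda(\sum_{m=a}^bp_{0,m}(1)+\delta Q_0(1))v_u$; (E7) $Q_n(u)=\bar\lambda Q_n(u+1)+\lambda\sum_{i=1}^ng_iQ_{n-i}(u+1)+v_u\big[\bar\lambda(\sum_{m=a}^bp_{n,m}(1)+\delta Q_n(1))+\lambda\sum_{i=1}^ng_i(\sum_{m=a}^bp_{n-i,m}(1)+\delta Q_{n-i}(1))\big]$, $1\le n\le a-1$; (E8) $Q_n(u)=\bar\lambda Q_n(u+1)+\lambda\sum_{i=1}^ng_iQ_{n-i}(u+1)$,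 $n\ge a$; (N) $(1-\delta)\sum_{n=0}^{a-1}p_{n,0}+\sum_{n,r,u}p_{n,r}(u)+\sum_{n,u}Q_n(u)=1$. With $\tau=\sum_{m\ge0}\sum_{r=a}^bp_{m,r}(1)+\sum_{m\ge0}Q_m(1)$: $p^+_{0,r}=\tau^{-1}\bar\lambda p_{0,r}(1)$, $p^+_{n,r}=\tau^{-1}(\bar\lambda p_{n,r}(1)+\lambda\sum_{i=1}^ng_ip_{n-i,r}(1))$ ($n\ge1$); $p^+_n=\sum_{r=a}^bp^+_{n,r}$; $Q^+_0=\tau^{-1}\bar\lambda Q_0(1)$, $Q^+_n=\tau^{-1}(\bar\lambda Q_n(1)+\lambda\sum_{i=1}^ng_iQ_{n-i}(1))$ ($n\ge1$). $K^{(r)}(x)=S_r^*(\bar\lambda+\lambda G(x))$, $H(x)=V^*(\bar\lambda+\lambda G(x))$. $e_{n,i}$ ($0\le i\le n$): $e_{n,n}=1$, $e_{n,n-1}=g_1$, $e_{n,i}=\sum_{j=i+1}^{n-1}e_{n,j}g_{j-i}+g_{n-i}$ for $0\le i\le n-2$. *)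

(* Defs.v *)
From Stdlib Require Import Reals List.
From Coquelicot Require Import Coquelicot.
Open Scope R_scope.

Definition rsum (f : nat -> R) (m n : nat) : R := sum_n_m f m n.
Definition csum (f : nat -> C) (m n : nat) : C := sum_n_m f m n.

Definition Cser (c : nat -> C) : C :=
  (Series (fun n => Re (c n)), Series (fun n => Im (c n))).

Definition pgf (f : nat -> R) (z : C) : C :=
  Cser (fun n => (RtoC (f n) * Cpow z n)%C).

(* The sequence e_{n,i} (0 <= i <= n) of the paper:
   e_{n,n} = 1, e_{n,n-1} = g_1,
   e_{n,i} = sum_{j=i+1}^{n-1} e_{n,j} g_{j-i} + g_{n-i}  (0 <= i <= n-2).
   etab g n k is the list [e_{n,n}; e_{n,n-1}; ...; e_{n,n-k}]
   (computed by recursion on k = n - i). *)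
Fixpoint etab (g : nat -> R) (n k : nat) : list R :=
  match k with
  | O => 1 :: nil
  | S k' =>
      let l := etab g n k' in
      let i := (n - S k')%nat in
      let val :=
        match k' with
        | O => g 1%nat
        | _ => rsum (fun j => nth (n - j)%nat l 0 * g (j - i)%nat) (S i) (n - 1)
               + g (n - i)%nat
        end in
      l ++ val :: nil
  end.

Definition e_coef (g : nat -> R) (n i : nat) : R :=
  nth (n - i)%nat (etab g n (n - i)) 0.

(* Model primitives.  Indices: g m (group size m, g 0 = 0), s r n (service
   time pmf of a batch of size r), v n (vacation pmf), p0 n = p_{n,0},
   p n r u = p_{n,r}(u), Q n u = Q_n(u). *)

Definition is_pmf1 (f : nat -> R) : Prop :=
  f 0%nat = 0 /\ (forall n, 0 <= f n) /\ is_series f 1 /\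
  ex_series (fun n => INR n * f n).

Definition mean (f : nat -> R) : R := Series (fun n => INR n * f n).

Definition stationary (a b : nat) (lam delta : R) (g : nat -> R)
  (s : nat -> nat -> R) (v : nat -> R)
  (p0 : nat -> R) (p : nat -> nat -> nat -> R) (Q : nat -> nat -> R) : Prop :=
  let lb := 1 - lam in
  (forall n, 0 <= p0 n) /\ (forall n r u, 0 <= p n r u) /\ (forall n u, 0 <= Q n u) /\
  p0 0%nat = (1 - delta) * (lb * p0 0%nat + lb * Q 0%nat 1%nat) /\
  (forall n, (1 <= n <= a - 1)%nat ->
     p0 n = (1 - delta) * (lb * p0 n + lam * rsum (fun i => g i * p0 (n - i)%nat) 1 n
                           + lb * Q n 1%nat
                           + lam * rsum (fun i => g i * Q (n - i)%nat 1%nat) 1 n)) /\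
  (forall r u, (a <= r <= b)%nat -> (1 <= u)%nat ->
     p 0%nat r u = lb * p 0%nat r (S u)
       + s r u * (rsum (fun m => lb * p r m 1%nat
                                 + lam * rsum (fun i => g i * p (r - i)%nat m 1%nat) 1 r) a b
                  + lb * Q r 1%nat + lam * rsum (fun i => g i * Q (r - i)%nat 1%nat) 1 r
                  + (1 - delta) * lam * rsum (fun i => g (r - i)%nat * p0 i) 0 (a - 1))) /\
  (forall n r u, (1 <= n)%nat -> (a <= r <= b - 1)%nat -> (1 <= u)%nat ->
     p n r u = lb * p n r (S u) + lam * rsum (fun i => g i * p (n - i)%nat r (S u)) 1 n) /\
  (forall n u, (1 <= n)%nat -> (1 <= u)%nat ->
     p n b u = lb * p n b (S u) + lam * rsum (fun i => g i * p (n - i)%nat b (S u)) 1 n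
       + s b u * (rsum (fun m => lb * p (n + b)%nat m 1%nat
                      + lam * rsum (fun i => g i * p (n + b - i)%nat m 1%nat) 1 (n + b)) a b
                  + lb * Q (n + b)%nat 1%nat
                  + lam * rsum (fun i => g i * Q (n + b - i)%nat 1%nat) 1 (n + b)
                  + (1 - delta) * lam * rsum (fun i => g (n + b - i)%nat * p0 i) 0 (a - 1))) /\
  (forall u, (1 <= u)%nat ->
     Q 0%nat u = lb * Q 0%nat (S u)
       + lb * (rsum (fun m => p 0%nat m 1%nat) a b + delta * Q 0%nat 1%nat) * v u) /\
  (forall n u, (1 <= n <= a - 1)%nat -> (1 <= u)%nat ->
     Q n u = lb * Q n (S u) + lam * rsum (fun i => g i * Q (n - i)%nat (S u)) 1 n
       + v u * (lb * (rsum (fun m => p n m 1%nat) a b + delta * Q n 1%nat)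
                + lam * rsum (fun i => g i * (rsum (fun m => p (n - i)%nat m 1%nat) a b
                                              + delta * Q (n - i)%nat 1%nat)) 1 n)) /\
  (forall n u, (a <= n)%nat -> (1 <= u)%nat ->
     Q n u = lb * Q n (S u) + lam * rsum (fun i => g i * Q (n - i)%nat (S u)) 1 n) /\
  (forall n r, ex_series (fun u => p n r (S u))) /\
  (forall n, ex_series (fun u => Q n (S u))) /\
  is_series (fun n => rsum (fun r => Series (fun u => p n r (S u))) a b
                      + Series (fun u => Q n (S u)))
            (1 - (1 - delta) * rsum p0 0 (a - 1)).

Definition tau (a b : nat) (p : nat -> nat -> nat -> R) (Q : nat -> nat -> R) : R :=
  Series (fun m => rsum (fun r => p m r 1%nat) a b + Q m 1%nat).

Definition pplus (a b : nat) (lam : R) (g : nat -> R)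
  (p : nat -> nat -> nat -> R) (Q : nat -> nat -> R) (n : nat) : R :=
  match n with
  | O => / tau a b p Q * rsum (fun r => (1 - lam) * p 0%nat r 1%nat) a b
  | _ => / tau a b p Q * rsum (fun r => (1 - lam) * p n r 1%nat
                  + lam * rsum (fun i => g i * p (n - i)%nat r 1%nat) 1 n) a b
  end.

Definition Qplus (a b : nat) (lam : R) (g : nat -> R)
  (p : nat -> nat -> nat -> R) (Q : nat -> nat -> R) (n : nat) : R :=
  match n with
  | O => / tau a b p Q * ((1 - lam) * Q 0%nat 1%nat)
  | _ => / tau a b p Q * ((1 - lam) * Q n 1%nat
                  + lam * rsum (fun i => g i * Q (n - i)%nat 1%nat) 1 n)
  end.

Definition Kf (lam : R) (g : nat -> R) (s : nat -> nat -> R) (r : nat) (x : C) : C :=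
  pgf (s r) (RtoC (1 - lam) + RtoC lam * pgf g x)%C.

Definition Hf (lam : R) (g : nat -> R) (v : nat -> R) (x : C) : C :=
  pgf v (RtoC (1 - lam) + RtoC lam * pgf g x)%C.

(* Main.v *)
Require Import Defs.
From Stdlib Require Import Reals.
From Coquelicot Require Import Coquelicot.
Open Scope R_scope.
From Stdlib Require Import Lia Lra Arith List.

Lemma c_proj_eq (x y : C) : Re x = Re y -> Im x = Im y -> x = y.
Proof. destruct x, y; simpl; intros; subst; auto. Qed.

Fixpoint rps (f : nat -> R) (N : nat) : R :=
  match N with O => 0 | S N' => rps f N' + f N' end.
Fixpoint cps (f : nat -> C) (N : nat) : C :=
  match N with O => RtoC 0 | S N' => (cps f N' + f N')%C end.

Lemma rps_ext f h N : (forall k, (k < N)%nat -> f k = h k) -> rps f N = rps h N.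
Proof. induction N; simpl; intros H; auto. rewrite IHN, H; auto. Qed.
Lemma cps_ext f h N : (forall k, (k < N)%nat -> f k = h k) -> cps f N = cps h N.
Proof. induction N; simpl; intros H; auto. rewrite IHN, H; auto. Qed.
Lemma rps_plus f h N : rps (fun k => f k + h k) N = rps f N + rps h N.
Proof. induction N; simpl; [lra|]. rewrite IHN; lra. Qed.
Lemma cps_plus f h N : cps (fun k => f k + h k)%C N = (cps f N + cps h N)%C.
Proof. induction N; simpl. apply c_proj_eq; simpl; lra. rewrite IHN; ring. Qed.
Lemma rps_scal c f N : rps (fun k => c * f k) N = c * rps f N.
Proof. induction N; simpl; [lra|]. rewrite IHN; lra. Qed.
Lemma cps_scal c f N : cps (fun k => c * f k)%C N = (c * cps f N)%C.
Proof. induction N; simpl. apply c_proj_eq; simpl; lra. rewrite IHN; ring. Qed.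
Lemma rps_minus f h N : rps (fun k => f k - h k) N = rps f N - rps h N.
Proof. induction N; simpl; [lra|]. rewrite IHN; lra. Qed.
Lemma cps_scal_r c f N : cps (fun k => f k * c)%C N = (cps f N * c)%C.
Proof. induction N; simpl. apply c_proj_eq; simpl; lra. rewrite IHN; ring. Qed.
Lemma rps_zero N : rps (fun _ => 0) N = 0.
Proof. induction N; simpl; lra. Qed.
Lemma cps_zero N : cps (fun _ => RtoC 0) N = RtoC 0.
Proof. induction N; simpl; auto. rewrite IHN; ring. Qed.
Lemma rps_Sl f N : rps f (S N) = f O + rps (fun k => f (S k)) N.
Proof. induction N; simpl in *; [lra|]. rewrite IHN; lra. Qed.
Lemma cps_Sl f N : cps f (S N) = (f O + cps (fun k => f (S k)) N)%C.
Proof. induction N. simpl. ring. change (cps f (S (S N))) with (cps f (S N) + f (S N))%C.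
  rewrite IHN; simpl; ring. Qed.
Lemma rps_add f N M : rps f (N + M) = rps f N + rps (fun k => f (N + k)%nat) M.
Proof. induction M; simpl. rewrite Nat.add_0_r; lra. rewrite Nat.add_succ_r; simpl; rewrite IHM; lra. Qed.
Lemma cps_add f N M : cps f (N + M) = (cps f N + cps (fun k => f (N + k)%nat) M)%C.
Proof. induction M; simpl. rewrite Nat.add_0_r; ring. rewrite Nat.add_succ_r; simpl; rewrite IHM; ring. Qed.
Lemma rps_swap (F : nat -> nat -> R) N M :
  rps (fun i => rps (fun j => F i j) M) N = rps (fun j => rps (fun i => F i j) N) M.
Proof. induction N; simpl. rewrite rps_zero; auto. rewrite IHN, <- rps_plus; auto. Qed.
Lemma cps_swap (F : nat -> nat -> C) N M :
  cps (fun i => cps (fun j => F i j) M) N = cps (fun j => cps (fun i => F i j) N) M.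
Proof. induction N; simpl. rewrite cps_zero; auto. rewrite IHN, <- cps_plus; auto. Qed.
Lemma Re_cps f N : Re (cps f N) = rps (fun k => Re (f k)) N.
Proof. induction N; simpl; auto. rewrite <- IHN; auto. Qed.
Lemma Im_cps f N : Im (cps f N) = rps (fun k => Im (f k)) N.
Proof. induction N; simpl; auto. rewrite <- IHN; auto. Qed.
Lemma RtoC_rps f N : RtoC (rps f N) = cps (fun k => RtoC (f k)) N.
Proof. induction N; simpl; auto. rewrite <- IHN. apply c_proj_eq; simpl; lra. Qed.
Lemma rps_le f h N : (forall k, (k < N)%nat -> f k <= h k) -> rps f N <= rps h N.
Proof. induction N; simpl; intros H; [lra|]. pose proof (H N ltac:(lia)). pose proof (IHN ltac:(intros; apply H; lia)). lra. Qed.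
Lemma rps_nonneg f N : (forall k, (k < N)%nat -> 0 <= f k) -> 0 <= rps f N.
Proof. intros H. rewrite <- (rps_zero N). apply rps_le. auto. Qed.

Lemma rsum_rps f m n : rsum f m n = rps (fun k => f (m + k)%nat) (S n - m).
Proof.
  unfold rsum. induction n.
  - destruct m. simpl. rewrite sum_n_n. simpl; lra.
    rewrite sum_n_m_zero by lia. replace (1 - S m)%nat with 0%nat by lia. reflexivity.
  - destruct (le_lt_dec m (S n)).
    + rewrite sum_n_Sm by lia. rewrite IHn. replace (S (S n) - m)%nat with (S (S n - m)) by lia.
      cbn [rps cps]; replace (m + (S n - m))%nat with (S n) by lia; reflexivity.
    + rewrite sum_n_m_zero by lia. replace (S (S n) - m)%nat with 0%nat by lia. reflexivity.
Qed.
Lemma csum_cps f m n : csum f m n = cps (fun k => f (m + k)%nat) (S n - m).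
Proof.
  unfold csum. induction n.
  - destruct m. simpl. rewrite sum_n_n. simpl; ring.
    rewrite sum_n_m_zero by lia. replace (1 - S m)%nat with 0%nat by lia. reflexivity.
  - destruct (le_lt_dec m (S n)).
    + rewrite sum_n_Sm by lia. rewrite IHn. replace (S (S n) - m)%nat with (S (S n - m)) by lia.
      cbn [rps cps]; replace (m + (S n - m))%nat with (S n) by lia; reflexivity.
    + rewrite sum_n_m_zero by lia. replace (S (S n) - m)%nat with 0%nat by lia. reflexivity.
Qed.
Lemma sum_n_rps f N : sum_n f N = rps f (S N).
Proof. induction N. rewrite sum_O. simpl; lra. rewrite sum_Sn, IHN. reflexivity. Qed.
Lemma sum_f_R0_rps f N : sum_f_R0 f N = rps f (S N).
Proof. induction N. simpl; lra. simpl. rewrite IHN. reflexivity. Qed.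

Definition isC (a : nat -> C) (l : C) :=
  is_series (fun n => Re (a n)) (Re l) /\ is_series (fun n => Im (a n)) (Im l).

Lemma isC_unique a l1 l2 : isC a l1 -> isC a l2 -> l1 = l2.
Proof. intros [H1 H2] [H3 H4]. apply c_proj_eq.
  apply is_series_unique in H1, H3. congruence.
  apply is_series_unique in H2, H4. congruence. Qed.

Lemma isC_Cser a l : isC a l -> Cser a = l.
Proof. intros [H1 H2]. unfold Cser. apply is_series_unique in H1, H2. rewrite H1, H2.
  destruct l; reflexivity. Qed.

Lemma isC_ext a b l : (forall n, a n = b n) -> isC a l -> isC b l.
Proof. intros E [H1 H2]. split; eapply is_series_ext; try eassumption; intros n; simpl; rewrite E; auto. Qed.

Lemma isC_plus a b la lb : isC a la -> isC b lb -> isC (fun n => a n + b n)%C (la + lb)%C.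
Proof. intros [H1 H2] [H3 H4]. split; simpl.
  apply (is_series_plus _ _ _ _ H1 H3). apply (is_series_plus _ _ _ _ H2 H4). Qed.

Lemma isC_scal c a l : isC a l -> isC (fun n => c * a n)%C (c * l)%C.
Proof. intros [H1 H2]. split; simpl.
  - eapply is_series_ext; [| apply (is_series_minus _ _ _ _ (is_series_scal_l (Re c) _ _ H1) (is_series_scal_l (Im c) _ _ H2))].
    intros n; reflexivity.
  - eapply is_series_ext; [| apply (is_series_plus _ _ _ _ (is_series_scal_l (Re c) _ _ H2) (is_series_scal_l (Im c) _ _ H1))].
    intros n; reflexivity. Qed.

Lemma isC_minus a b la lb : isC a la -> isC b lb -> isC (fun n => a n - b n)%C (la - lb)%C.
Proof. intros H1 H2. apply (isC_scal (RtoC (-1))) in H2.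
  assert (H := isC_plus _ _ _ _ H1 H2).
  replace (la - lb)%C with (la + RtoC (-1) * lb)%C by (apply c_proj_eq; simpl; ring).
  eapply isC_ext; [|exact H]. intros n; simpl. apply c_proj_eq; simpl; ring. Qed.

Lemma is_series_lim (a : nat -> R) l : is_series a l <-> is_lim_seq (fun N => rps a (S N)) l.
Proof. unfold is_series, is_lim_seq. split; intros H.
  - eapply filterlim_ext; [|exact H]. intros; apply sum_n_rps.
  - eapply filterlim_ext; [|exact H]. intros; simpl; rewrite sum_n_rps; auto. Qed.

Lemma is_series_zero : is_series (fun _ => 0) 0.
Proof. apply is_series_lim. eapply is_lim_seq_ext; [|apply is_lim_seq_const].
  intros; simpl; rewrite rps_zero; lra. Qed.

Lemma isC_zero : isC (fun _ => RtoC 0) (RtoC 0).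
Proof. split; simpl; apply is_series_zero. Qed.

Lemma isC_cps (F : nat -> nat -> C) (L : nat -> C) N :
  (forall i, (i < N)%nat -> isC (F i) (L i)) ->
  isC (fun n => cps (fun i => F i n) N) (cps L N).
Proof. induction N; intros H; simpl.
  - apply isC_zero.
  - apply isC_plus; auto. Qed.

Lemma is_series_shift (a : nat -> R) l N :
  is_series a l -> is_series (fun k => a (k + N)%nat) (l - rps a N).
Proof. intros H. destruct N.
  - simpl. eapply is_series_ext; [|replace (l - 0) with l by lra; exact H]. intros; f_equal; lia.
  - eapply is_series_ext; [|apply (is_series_incr_n a (S N)); [lia|]].
    intros; simpl; f_equal; lia.
    simpl pred. rewrite sum_n_rps. match goal with |- is_series _ ?L => replace L with l; auto end.
    unfold plus; simpl; lra. Qed.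

Lemma is_series_unshift (a : nat -> R) l N :
  is_series (fun k => a (k + N)%nat) l -> is_series a (l + rps a N).
Proof. intros H. destruct N.
  - simpl. eapply is_series_ext; [|rewrite Rplus_0_r; exact H]. intros n; cbv beta; rewrite Nat.add_0_r; auto.
  - apply (is_series_decr_n a (S N)); [lia|].
    simpl pred. rewrite sum_n_rps. match goal with |- is_series _ ?L => replace L with l end.
    eapply is_series_ext; [|exact H]. intros; simpl; f_equal; lia.
    unfold plus, opp; simpl; lra. Qed.

Lemma isC_shift a l N : isC a l -> isC (fun k => a (k + N)%nat) (l - cps a N)%C.
Proof. intros [H1 H2]. split; simpl; [rewrite Re_cps|rewrite Im_cps]; apply is_series_shift; auto. Qed.

Lemma isC_unshift a l N : isC (fun k => a (k + N)%nat) l -> isC a (l + cps a N)%C.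
Proof. intros [H1 H2]. split; simpl; [rewrite Re_cps|rewrite Im_cps]; apply (is_series_unshift (fun n => _ (a n))); auto. Qed.

Lemma isC_single k c : isC (fun n => if Nat.eqb n k then c else RtoC 0) c.
Proof.
  assert (H := isC_unshift (fun n => if Nat.eqb n k then c else RtoC 0) (RtoC 0) (S k)).
  assert (E : (RtoC 0 + cps (fun n => if Nat.eqb n k then c else RtoC 0) (S k))%C = c).
  { simpl. rewrite Nat.eqb_refl. rewrite (cps_ext _ (fun _ => RtoC 0)). rewrite cps_zero. ring.
    intros j Hj. destruct (Nat.eqb_spec j k); auto; lia. }
  rewrite E in H. apply H. eapply isC_ext; [|apply isC_zero]. intros n; simpl.
  destruct (Nat.eqb_spec (n + S k) k); auto; lia. Qed.

Lemma im_le_Cmod c : Rabs (Im c) <= Cmod c.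
Proof. pose proof (Cmod2_alt c). pose proof (Cmod_ge_0 c).
  unfold Rabs; destruct (Rcase_abs (Im c)); nra. Qed.

Lemma isC_exists a : ex_series (fun n => Cmod (a n)) -> exists l, isC a l.
Proof. intros H.
  assert (H1 : ex_series (fun n => Re (a n))).
  { apply (@ex_series_le R_AbsRing R_CompleteNormedModule _ _ (fun n => re_le_Cmod (a n)) H). }
  assert (H2 : ex_series (fun n => Im (a n))).
  { apply (@ex_series_le R_AbsRing R_CompleteNormedModule _ _ (fun n => im_le_Cmod (a n)) H). }
  destruct H1 as [l1 H1], H2 as [l2 H2]. exists (l1, l2). split; auto. Qed.

Lemma Cmod_cps a N : Cmod (cps a N) <= rps (fun n => Cmod (a n)) N.
Proof. induction N; simpl. rewrite Cmod_0; lra.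
  eapply Rle_trans; [apply Cmod_triangle|]. lra. Qed.

Lemma rps_le_series c M N : (forall n, 0 <= c n) -> is_series c M -> rps c N <= M.
Proof. intros Hc H. apply is_series_lim in H.
  assert (H1 : rps c (S N) <= M).
  { apply (is_lim_seq_incr_compare (fun N => rps c (S N))); auto.
    intros n; change (rps c (S (S n))) with (rps c (S n) + c (S n)). pose proof (Hc (S n)); lra. }
  simpl in H1. pose proof (Hc N). lra. Qed.

Lemma isC_Cmod_le a l c M : isC a l -> (forall n, Cmod (a n) <= c n) -> is_series c M -> Cmod l <= M.
Proof. intros [H1 H2] Hc HM.
  assert (Hc0 : forall n, 0 <= c n) by (intros n; eapply Rle_trans; [apply Cmod_ge_0|apply Hc]).
  assert (HM0 : 0 <= M) by (apply (Rle_trans _ (rps c 0)); [simpl; lra|apply rps_le_series; auto]).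
  assert (B : forall N, Cmod (cps a (S N)) <= M).
  { intros N. eapply Rle_trans; [apply Cmod_cps|]. eapply Rle_trans; [apply rps_le; intros; apply Hc|].
    apply rps_le_series; auto. }
  apply is_series_lim in H1, H2.
  assert (L := is_lim_seq_plus' _ _ _ _ (is_lim_seq_mult' _ _ _ _ H1 H1) (is_lim_seq_mult' _ _ _ _ H2 H2)).
  assert (Bn : forall N, rps (fun n => Re (a n)) (S N) * rps (fun n => Re (a n)) (S N)
     + rps (fun n => Im (a n)) (S N) * rps (fun n => Im (a n)) (S N) <= M * M).
  { intros N. rewrite <- Re_cps, <- Im_cps. pose proof (Cmod2_alt (cps a (S N))).
    pose proof (B N). pose proof (Cmod_ge_0 (cps a (S N))). simpl in *. nra. }
  assert (Le := is_lim_seq_le _ _ _ _ Bn L (is_lim_seq_const (M * M))).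
  simpl in Le. pose proof (Cmod2_alt l). pose proof (Cmod_ge_0 l). nra. Qed.

Lemma exRe a : ex_series (fun n => Cmod (a n)) -> ex_series (fun n => Rabs (Re (a n))).
Proof. intros H. apply (@ex_series_le R_AbsRing R_CompleteNormedModule _ (fun n => Cmod (a n))); auto.
  intros n. change (norm (Rabs (Re (a n)))) with (Rabs (Rabs (Re (a n)))). rewrite Rabs_Rabsolu; apply re_le_Cmod. Qed.
Lemma exIm a : ex_series (fun n => Cmod (a n)) -> ex_series (fun n => Rabs (Im (a n))).
Proof. intros H. apply (@ex_series_le R_AbsRing R_CompleteNormedModule _ (fun n => Cmod (a n))); auto.
  intros n. change (norm (Rabs (Im (a n)))) with (Rabs (Rabs (Im (a n)))). rewrite Rabs_Rabsolu; apply im_le_Cmod. Qed.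

Lemma isC_mult a b A B : isC a A -> isC b B ->
  ex_series (fun n => Cmod (a n)) -> ex_series (fun n => Cmod (b n)) ->
  isC (fun n => cps (fun k => a k * b (n - k)%nat)%C (S n)) (A * B)%C.
Proof. intros [Ha1 Ha2] [Hb1 Hb2] Ea Eb.
  assert (EaR := exRe _ Ea).
  assert (EaI := exIm _ Ea).
  assert (EbR := exRe _ Eb).
  assert (EbI := exIm _ Eb).
  split.
  - assert (H := is_series_minus _ _ _ _ (is_series_mult _ _ _ _ Ha1 Hb1 EaR EbR) (is_series_mult _ _ _ _ Ha2 Hb2 EaI EbI)).
    eapply is_series_ext; [|exact H]. intros n. cbv beta. rewrite Re_cps, !sum_f_R0_rps.
    change (plus ?x (opp ?y)) with (x - y). rewrite <- rps_minus. apply rps_ext. intros k _; destruct (a k), (b (n - k)%nat); simpl; ring.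
  - assert (H := is_series_plus _ _ _ _ (is_series_mult _ _ _ _ Ha1 Hb2 EaR EbI) (is_series_mult _ _ _ _ Ha2 Hb1 EaI EbR)).
    eapply is_series_ext; [|exact H]. intros n. cbv beta. rewrite Im_cps, !sum_f_R0_rps.
    change (plus ?x ?y) with (x + y). rewrite <- rps_plus. apply rps_ext. intros k _; destruct (a k), (b (n - k)%nat); simpl; ring.
Qed.

Definition cv (lam : R) (g : nat -> R) (f : nat -> R) (n : nat) : R :=
  (1 - lam) * f n + lam * rsum (fun i => g i * f (n - i)%nat) 1 n.

Definition wz (lam : R) (g : nat -> R) (x : C) : C := (RtoC (1 - lam) + RtoC lam * pgf g x)%C.

Lemma pow_le1 r n : 0 <= r <= 1 -> r ^ n <= 1.
Proof. intros H. induction n; simpl; [lra|]. pose proof (pow_le r n (proj1 H)). nra. Qed.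

Lemma Cmod_RtoC_pow (h : R) (z : C) n : Cmod z <= 1 -> Cmod (RtoC h * Cpow z n) <= Rabs h.
Proof. intros Hz. rewrite Cmod_mult, Cmod_R, Cmod_pow.
  assert (0 <= Cmod z ^ n <= 1). { split. apply pow_le, Cmod_ge_0. apply pow_le1; split; auto; apply Cmod_ge_0. }
  pose proof (Rabs_pos h). nra. Qed.

Lemma ser_isC (h : nat -> R) (z : C) : ex_series (fun n => Rabs (h n)) -> Cmod z <= 1 ->
  isC (fun n => RtoC (h n) * Cpow z n)%C (Cser (fun n => RtoC (h n) * Cpow z n)%C) /\
  ex_series (fun n => Cmod (RtoC (h n) * Cpow z n)%C).
Proof. intros Hh Hz.
  assert (E : ex_series (fun n => Cmod (RtoC (h n) * Cpow z n)%C)).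
  { apply (@ex_series_le R_AbsRing R_CompleteNormedModule _ (fun n => Rabs (h n))); auto.
    intros n. change (norm (Cmod (RtoC (h n) * Cpow z n)%C)) with (Rabs (Cmod (RtoC (h n) * Cpow z n)%C)).
    rewrite Rabs_pos_eq by apply Cmod_ge_0. apply Cmod_RtoC_pow; auto. }
  destruct (isC_exists _ E) as [l Hl]. rewrite (isC_Cser _ _ Hl). auto. Qed.

Lemma pmf_ex f : is_pmf1 f -> ex_series (fun n => Rabs (f n)).
Proof. intros (H0 & Hp & Hs & _). exists 1. eapply is_series_ext; [|exact Hs].
  intros n; rewrite Rabs_pos_eq; auto. Qed.

Lemma pgf_isC f z : is_pmf1 f -> Cmod z <= 1 ->
  isC (fun n => RtoC (f n) * Cpow z n)%C (pgf f z) /\ Cmod (pgf f z) <= 1 /\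
  ex_series (fun n => Cmod (RtoC (f n) * Cpow z n)%C).
Proof. intros Hf Hz. destruct (ser_isC f z (pmf_ex f Hf) Hz) as [H1 H2].
  split; [exact H1|split; auto].
  apply (isC_Cmod_le _ _ f 1 H1). intros n. eapply Rle_trans; [apply Cmod_RtoC_pow; auto|].
  destruct Hf as (_ & Hp & _). rewrite Rabs_pos_eq; auto. lra.
  destruct Hf as (_ & _ & Hs & _); auto. Qed.

Lemma wz_le1 lam g x : 0 < lam < 1 -> is_pmf1 g -> Cmod x <= 1 -> Cmod (wz lam g x) <= 1.
Proof. intros Hl Hg Hx. destruct (pgf_isC g x Hg Hx) as (_ & H & _). unfold wz.
  eapply Rle_trans; [apply Cmod_triangle|]. rewrite !Cmod_mult, !Cmod_R, !Rabs_pos_eq by lra.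
  nra. Qed.

Lemma is_series_single k r : is_series (fun n => if Nat.eqb n k then r else 0) r.
Proof. destruct (isC_single k (RtoC r)) as [H _]. eapply is_series_ext; [|exact H].
  intros n; simpl; destruct (Nat.eqb n k); auto. Qed.

Lemma rsum1_rps f n : rsum f 1 n = rps (fun k => f (S k)) n.
Proof. rewrite rsum_rps. replace (S n - 1)%nat with n by lia. reflexivity. Qed.

Lemma L_conv lam g x f F : 0 < lam < 1 -> is_pmf1 g -> Cmod x <= 1 ->
  ex_series (fun n => Rabs (f n)) -> isC (fun n => RtoC (f n) * Cpow x n)%C F ->
  isC (fun n => RtoC (cv lam g f n) * Cpow x n)%C (wz lam g x * F)%C.
Proof. intros Hl Hg Hx Hf HF.
  set (c := fun n => (if Nat.eqb n 0 then 1 - lam else 0) + lam * g n).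
  destruct (pgf_isC g x Hg Hx) as (HG & _ & EG).
  assert (Hc : isC (fun n => RtoC (c n) * Cpow x n)%C (wz lam g x)).
  { unfold wz. eapply isC_ext; [|apply isC_plus; [apply (isC_single 0 (RtoC (1 - lam)))| apply (isC_scal (RtoC lam)); exact HG]].
    intros n. unfold c. destruct n; simpl.
    - destruct Hg as (H0 & _). rewrite H0. apply c_proj_eq; simpl; ring.
    - apply c_proj_eq; simpl; ring. }
  assert (Ec : ex_series (fun n => Cmod (RtoC (c n) * Cpow x n)%C)).
  { apply (@ex_series_le R_AbsRing R_CompleteNormedModule _ (fun n => Rabs (c n))).
    intros n. change (norm (Cmod (RtoC (c n) * Cpow x n)%C)) with (Rabs (Cmod (RtoC (c n) * Cpow x n)%C)).
    rewrite Rabs_pos_eq by apply Cmod_ge_0. apply Cmod_RtoC_pow; auto.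
    exists ((1 - lam) + lam * 1). eapply is_series_ext; [|apply (is_series_plus _ _ _ _ (is_series_single 0 (1 - lam)) (is_series_scal_l lam _ _ (proj1 (proj2 (proj2 Hg)))))].
    intros n. unfold c. destruct Hg as (H0 & Hp & _). pose proof (Hp n).
    rewrite Rabs_pos_eq. reflexivity. destruct (Nat.eqb n 0); unfold scal; simpl; unfold mult; simpl; nra. }
  assert (Ef : ex_series (fun n => Cmod (RtoC (f n) * Cpow x n)%C)).
  { apply (@ex_series_le R_AbsRing R_CompleteNormedModule _ (fun n => Rabs (f n))); auto.
    intros n. change (norm (Cmod (RtoC (f n) * Cpow x n)%C)) with (Rabs (Cmod (RtoC (f n) * Cpow x n)%C)).
    rewrite Rabs_pos_eq by apply Cmod_ge_0. apply Cmod_RtoC_pow; auto. }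
  assert (M := isC_mult _ _ _ _ Hc HF Ec Ef).
  eapply isC_ext; [|exact M]. intros n. cbv beta.
  rewrite (cps_ext _ (fun k => Cpow x n * RtoC (c k * f (n - k)%nat))%C).
  2:{ intros k Hk. replace n with (k + (n - k))%nat at 3 by lia. rewrite Cpow_add_r.
      rewrite RtoC_mult. ring. }
  rewrite cps_scal, <- RtoC_rps, rps_Sl. unfold cv. rewrite rsum1_rps.
  unfold c at 1. simpl Nat.eqb. destruct Hg as (H0 & _). rewrite H0, Nat.sub_0_r.
  rewrite (rps_ext _ (fun k => lam * (g (S k) * f (n - S k)%nat))).
  2:{ intros k _. unfold c. simpl. ring. }
  rewrite rps_scal. rewrite Cmult_comm. f_equal. f_equal. ring. Qed.

Lemma is_series_rps (F : nat -> nat -> R) (L : nat -> R) K :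
  (forall u, (u < K)%nat -> is_series (F u) (L u)) ->
  is_series (fun n => rps (fun u => F u n) K) (rps L K).
Proof. induction K; intros H; simpl.
  - apply is_series_zero.
  - apply (is_series_plus _ _ _ _ (IHK (fun u Hu => H u ltac:(lia))) (H K ltac:(lia))). Qed.

Lemma Series_ge0 a : (forall n, 0 <= a n) -> ex_series a -> 0 <= Series a.
Proof. intros H1 H2. apply Rle_trans with (rps a 0). simpl; lra.
  apply rps_le_series; auto. apply Series_correct; auto. Qed.

Lemma term_le_Series a k : (forall n, 0 <= a n) -> ex_series a -> a k <= Series a.
Proof. intros H1 H2. apply Rle_trans with (rps a (S k)). simpl. pose proof (rps_nonneg a k (fun j _ => H1 j)). lra.
  apply rps_le_series; auto. apply Series_correct; auto. Qed.

Lemma ex_series_bounded T M : (forall n, 0 <= T n) -> (forall N, rps T N <= M) -> ex_series T.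
Proof. intros H1 H2.
  destruct (ex_finite_lim_seq_incr (fun N => rps T (S N)) M) as [l Hl].
  - intros n. change (rps T (S (S n))) with (rps T (S n) + T (S n)). pose proof (H1 (S n)); lra.
  - intros n; apply H2.
  - exists l. apply is_series_lim. auto. Qed.

Lemma lim_eq_C (X : C) (P : nat -> C) (S0 CC : C) (B : nat -> C) (V : nat -> R) :
  (forall k, X = (P k * CC + B k)%C) ->
  is_lim_seq (fun k => Re (P k)) (Re S0) -> is_lim_seq (fun k => Im (P k)) (Im S0) ->
  (forall k, Cmod (B k) <= V k) -> is_lim_seq V 0 -> X = (S0 * CC)%C.
Proof. intros HX H1 H2 HB HV.
  assert (HV' : is_lim_seq (fun k => - V k) (Rbar_opp 0)) by (apply -> is_lim_seq_opp; auto).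
  simpl in HV'. rewrite Ropp_0 in HV'.
  assert (BR : is_lim_seq (fun k => Re (B k)) 0).
  { apply (is_lim_seq_le_le (fun k => - V k) _ V); auto. intros k.
    pose proof (re_le_Cmod (B k)). pose proof (HB k). unfold Rabs in *; destruct Rcase_abs; split; lra. }
  assert (BI : is_lim_seq (fun k => Im (B k)) 0).
  { apply (is_lim_seq_le_le (fun k => - V k) _ V); auto. intros k.
    pose proof (im_le_Cmod (B k)). pose proof (HB k). unfold Rabs in *; destruct Rcase_abs; split; lra. }
  apply c_proj_eq.
  - assert (L : is_lim_seq (fun k => Re (P k) * Re CC - Im (P k) * Im CC + Re (B k)) (Re S0 * Re CC - Im S0 * Im CC + 0)).
    { apply is_lim_seq_plus'; auto. apply is_lim_seq_minus'; apply is_lim_seq_mult'; auto; apply is_lim_seq_const. }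
    assert (L2 : is_lim_seq (fun _ => Re X) (Re S0 * Re CC - Im S0 * Im CC + 0)).
    { eapply is_lim_seq_ext; [|exact L]. intros k. rewrite (HX k). destruct (P k), CC, (B k); simpl; ring. }
    apply is_lim_seq_unique in L2. rewrite Lim_seq_const in L2. injection L2; intros E; rewrite E; destruct S0, CC; simpl; ring.
  - assert (L : is_lim_seq (fun k => Re (P k) * Im CC + Im (P k) * Re CC + Im (B k)) (Re S0 * Im CC + Im S0 * Re CC + 0)).
    { apply is_lim_seq_plus'; auto. apply is_lim_seq_plus'; apply is_lim_seq_mult'; auto; apply is_lim_seq_const. }
    assert (L2 : is_lim_seq (fun _ => Im X) (Re S0 * Im CC + Im S0 * Re CC + 0)).
    { eapply is_lim_seq_ext; [|exact L]. intros k. rewrite (HX k). destruct (P k), CC, (B k); simpl; ring. }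
    apply is_lim_seq_unique in L2. rewrite Lim_seq_const in L2. injection L2; intros E; rewrite E; destruct S0, CC; simpl; ring.
Qed.

Lemma cv_nonneg lam g f n : 0 < lam < 1 -> is_pmf1 g -> (forall m, 0 <= f m) -> 0 <= cv lam g f n.
Proof. intros Hl Hg Hf. unfold cv. rewrite rsum1_rps.
  assert (0 <= rps (fun k => g (S k) * f (n - S k)%nat) n).
  { apply rps_nonneg. intros k _. destruct Hg as (_ & Hp & _). pose proof (Hp (S k)). pose proof (Hf (n - S k)%nat). nra. }
  pose proof (Hf n). nra. Qed.

Lemma cv_ex lam g f : 0 < lam < 1 -> is_pmf1 g -> (forall m, 0 <= f m) -> ex_series f ->
  ex_series (cv lam g f).
Proof. intros Hl Hg Hf Ex.
  destruct (ser_isC f (RtoC 1) ltac:(destruct Ex as [l Hl']; exists l; eapply is_series_ext; [|exact Hl']; intros; rewrite Rabs_pos_eq; auto)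
    ltac:(rewrite Cmod_1; lra)) as [H1 _].
  destruct (L_conv lam g (RtoC 1) f _ Hl Hg ltac:(rewrite Cmod_1; lra)
    ltac:(destruct Ex as [l Hl']; exists l; eapply is_series_ext; [|exact Hl']; intros; rewrite Rabs_pos_eq; auto) H1) as [H _].
  eexists. eapply is_series_ext; [|exact H]. intros n; simpl. rewrite Cpow_1_l. simpl. ring. Qed.

Lemma recA lam g x sv (f : nat -> nat -> R) (c : nat -> R) CC :
  0 < lam < 1 -> is_pmf1 g -> Cmod x <= 1 -> is_pmf1 sv ->
  (forall n u, 0 <= f n u) ->
  (forall n u, (1 <= u)%nat -> f n u = cv lam g (fun m => f m (S u)) n + sv u * c n) ->
  (forall n, ex_series (fun u => f n (S u))) ->
  ex_series (fun n => Series (fun u => f n (S u))) ->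
  isC (fun n => RtoC (c n) * Cpow x n)%C CC ->
  isC (fun n => RtoC (cv lam g (fun m => f m 1%nat) n) * Cpow x n)%C (pgf sv (wz lam g x) * CC)%C.
Proof.
  intros Hl Hg Hx Hs Hf Hrec Hu Hn HC.
  set (w := wz lam g x).
  assert (Hw : Cmod w <= 1) by (apply wz_le1; auto).
  set (Tn := fun n => Series (fun u => f n (S u))).
  assert (HT0 : forall n, 0 <= Tn n) by (intros n; apply Series_ge0; auto).
  assert (Hle : forall n u, (1 <= u)%nat -> f n u <= Tn n).
  { intros n u Hu1. replace u with (S (u - 1)) by lia. apply (term_le_Series (fun u => f n (S u))); auto. }
  assert (Hex : forall u, (1 <= u)%nat -> ex_series (fun n => f n u)).
  { intros u Hu1. apply (@ex_series_le R_AbsRing R_CompleteNormedModule _ Tn); auto.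
    intros n. change (norm (f n u)) with (Rabs (f n u)). rewrite Rabs_pos_eq; auto. }
  set (V := fun u => Series (fun n => f n (S u))).
  assert (HV0 : forall u, 0 <= V u) by (intros u; apply Series_ge0; auto; apply Hex; lia).
  assert (HVs : ex_series V).
  { apply (ex_series_bounded V (Series Tn)); auto. intros K.
    assert (E : is_series (fun n => rps (fun j => f n (S j)) K) (rps V K)).
    { apply is_series_rps. intros j _. apply Series_correct, Hex; lia. }
    apply is_series_unique in E. rewrite <- E. apply Series_le; auto.
    intros n; split. apply rps_nonneg; auto. apply rps_le_series; auto. apply Series_correct; auto. }
  assert (HVl : is_lim_seq V 0) by (apply ex_series_lim_0; auto).
  set (F := fun u => Cser (fun n => RtoC (f n u) * Cpow x n)%C).
  assert (HF : forall u, (1 <= u)%nat -> isC (fun n => RtoC (f n u) * Cpow x n)%C (F u)).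
  { intros u Hu1. apply ser_isC; auto. destruct (Hex u Hu1) as [l Hl']. exists l.
    eapply is_series_ext; [|exact Hl']. intros; rewrite Rabs_pos_eq; auto. }
  assert (HFm : forall u, Cmod (F (S u)) <= V u).
  { intros u. apply (isC_Cmod_le _ _ (fun n => f n (S u)) _ (HF (S u) ltac:(lia))).
    intros n. eapply Rle_trans; [apply Cmod_RtoC_pow; auto|]. rewrite Rabs_pos_eq; auto. lra.
    apply Series_correct, Hex; lia. }
  assert (Hconv : forall u, (1 <= u)%nat -> isC (fun n => RtoC (cv lam g (fun m => f m u) n) * Cpow x n)%C (w * F u)%C).
  { intros u Hu1. apply L_conv; auto. destruct (Hex u Hu1) as [l Hl']. exists l.
    eapply is_series_ext; [|exact Hl']. intros; rewrite Rabs_pos_eq; auto. }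
  assert (Hrc : forall u, (1 <= u)%nat -> F u = (w * F (S u) + RtoC (sv u) * CC)%C).
  { intros u Hu1. apply (isC_unique (fun n => RtoC (f n u) * Cpow x n)%C); auto.
    eapply isC_ext; [|apply isC_plus; [apply (Hconv (S u)); lia| apply (isC_scal (RtoC (sv u))); exact HC]].
    intros n. cbv beta. rewrite (Hrec n u Hu1). rewrite RtoC_plus, RtoC_mult. ring. }
  assert (Htele : forall k, (w * F 1%nat)%C = (cps (fun u => RtoC (sv u) * Cpow w u) (S k) * CC + Cpow w (S k) * F (S k))%C).
  { induction k.
    - simpl. destruct Hs as (H0 & _). rewrite H0. ring.
    - rewrite IHk. rewrite (Hrc (S k)) by lia. change (cps (fun u => RtoC (sv u) * Cpow w u) (S (S k)))%C
        with (cps (fun u => RtoC (sv u) * Cpow w u) (S k) + RtoC (sv (S k)) * Cpow w (S k))%C.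
      rewrite (Cpow_S w (S k)). ring. }
  destruct (pgf_isC sv w Hs Hw) as ([HS1 HS2] & _ & _).
  apply is_series_lim in HS1, HS2.
  replace (pgf sv w * CC)%C with (w * F 1%nat)%C.
  apply Hconv; lia.
  apply (lim_eq_C _ (fun k => cps (fun u => RtoC (sv u) * Cpow w u) (S k))%C _ _ (fun k => Cpow w (S k) * F (S k))%C V); auto.
  - eapply is_lim_seq_ext; [|exact HS1]. intros k; simpl. rewrite Re_cps. reflexivity.
  - eapply is_lim_seq_ext; [|exact HS2]. intros k; simpl. rewrite Im_cps. reflexivity.
  - intros k. rewrite Cmod_mult, Cmod_pow. pose proof (HFm k). pose proof (Cmod_ge_0 (F (S k))).
    assert (Cmod w ^ S k <= 1) by (apply pow_le1; split; auto; apply Cmod_ge_0).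
    assert (0 <= Cmod w ^ S k) by (apply pow_le, Cmod_ge_0). nra.
Qed.

Fixpoint hl (g : nat -> R) (k : nat) : list R :=
  match k with
  | O => 1 :: nil
  | S k' => hl g k' ++ (rps (fun t => nth t (hl g k') 0 * g (S k' - t)%nat) (S k')) :: nil
  end.

Definition hh g k := nth k (hl g k) 0.

Lemma hl_length g k : length (hl g k) = S k.
Proof. induction k; simpl; auto. rewrite length_app, IHk; simpl; lia. Qed.

Lemma hl_prefix g k t : (t <= k)%nat -> nth t (hl g k) 0 = hh g t.
Proof. induction k; intros Ht.
  - replace t with 0%nat by lia. reflexivity.
  - destruct (Nat.eq_dec t (S k)). subst. reflexivity.
    simpl. rewrite app_nth1 by (rewrite hl_length; lia). apply IHk; lia. Qed.

Lemma hh_0 g : hh g 0 = 1.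
Proof. reflexivity. Qed.

Lemma hh_S g k : hh g (S k) = rps (fun t => hh g t * g (S k - t)%nat) (S k).
Proof. unfold hh at 1. simpl. rewrite app_nth2 by (rewrite hl_length; lia).
  rewrite hl_length, Nat.sub_diag. simpl nth.
  change (rps (fun t => nth t (hl g k) 0 * g (S k - t)%nat) k + nth k (hl g k) 0 * g (S k - k)%nat =
          rps (fun t => hh g t * g (S k - t)%nat) (S k)).
  cbn [rps]. rewrite (hl_prefix g k k) by lia. f_equal. apply rps_ext. intros t Ht. rewrite hl_prefix by lia. auto. Qed.

Lemma rps_rev f N : rps f N = rps (fun m => f (N - 1 - m)%nat) N.
Proof. induction N. reflexivity.
  transitivity (rps f N + f N). reflexivity.
  rewrite (rps_Sl (fun m => f (S N - 1 - m)%nat) N). rewrite IHN. replace (S N - 1 - 0)%nat with N by lia.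
  rewrite Rplus_comm. f_equal. apply rps_ext. intros; f_equal; lia. Qed.

Lemma hh_fwd g m : hh g (S m) = rps (fun i => g (S i) * hh g (m - i)%nat) (S m).
Proof. rewrite hh_S, rps_rev. apply rps_ext. intros i Hi. rewrite Rmult_comm. f_equal; f_equal; lia. Qed.

Lemma etab_hl g n k : (k <= n)%nat -> etab g n k = hl g k.
Proof. induction k; intros Hk. reflexivity.
  simpl. rewrite IHk by lia. f_equal. f_equal.
  destruct k.
  - simpl. unfold hh. simpl. ring.
  - transitivity (rps (fun t => nth t (hl g (S k)) 0 * g (S (S k) - t)%nat) (S (S k))); [|reflexivity].
    rewrite (rps_Sl (fun t => nth t (hl g (S k)) 0 * g (S (S k) - t)%nat) (S k)).
    rewrite rsum_rps.
    replace (S (n - 1) - S (n - S (S k)))%nat with (S k) by lia.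
    replace (n - (n - S (S k)))%nat with (S (S k)) by lia.
    rewrite (hl_prefix g (S k) 0) by lia. rewrite hh_0.
    match goal with |- rps ?F (S k) + _ = _ + rps ?G (S k) => assert (E : rps F (S k) = rps G (S k)) end.
    { rewrite rps_rev. apply rps_ext. intros m Hm. f_equal; f_equal; lia. }
    rewrite E. replace (S (S k) - 0)%nat with (S (S k)) by lia. lra. Qed.

Lemma e_coef_hh g n i : e_coef g n i = hh g (n - i).
Proof. unfold e_coef. rewrite etab_hl by lia. reflexivity. Qed.

Lemma rps_trunc F M N : (M <= N)%nat -> rps (fun i => if Nat.ltb i M then F i else 0) N = rps F M.
Proof. intros H. replace N with (M + (N - M))%nat by lia. rewrite rps_add.
  rewrite (rps_ext _ F). rewrite (rps_ext _ (fun _ => 0) (N - M)). rewrite rps_zero. lra.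
  intros k _. destruct (Nat.ltb_spec (M + k) M); auto; lia.
  intros k Hk. destruct (Nat.ltb_spec k M); auto; lia. Qed.

Lemma renewal_inv g (y q : nat -> R) A :
  (forall j, (j < A)%nat -> y j = rps (fun i => g (S i) * y (j - S i)%nat) j + q j) ->
  forall j, (j < A)%nat -> y j = rps (fun n => hh g (j - n) * q n) (S j).
Proof. intros H j. induction j as [j IH] using lt_wf_ind. intros Hj.
  rewrite (H j Hj). cbn [rps]. rewrite Nat.sub_diag, hh_0, Rmult_1_l. f_equal.
  rewrite (rps_ext _ (fun i => g (S i) * rps (fun n => hh g (j - S i - n) * q n) (S (j - S i)))).
  2:{ intros i Hi. rewrite (IH (j - S i)%nat) by lia. auto. }
  (* both sides as rectangle sums *)
  transitivity (rps (fun i => rps (fun n => if Nat.ltb n (j - i) then g (S i) * hh g (j - S i - n) * q n else 0) j) j).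
  - apply rps_ext. intros i Hi. rewrite rps_trunc by lia. rewrite <- rps_scal.
    replace (S (j - S i)) with (j - i)%nat by lia. apply rps_ext. intros; ring.
  - rewrite rps_swap. apply rps_ext. intros n Hn.
    assert (E : hh g (j - n) = hh g (S (j - n - 1))) by (f_equal; lia). rewrite E, hh_fwd.
    rewrite (rps_ext _ (fun i => if Nat.ltb i (j - n) then g (S i) * hh g (j - S i - n) * q n else 0)).
    + rewrite rps_trunc by lia. replace (S (j - n - 1)) with (j - n)%nat by lia. rewrite Rmult_comm, <- rps_scal.
      apply rps_ext. intros i Hi. replace (j - n - 1 - i)%nat with (j - S i - n)%nat by lia. ring.
    + intros i Hi. destruct (Nat.ltb_spec n (j - i)), (Nat.ltb_spec i (j - n)); auto; lia.
Qed.

Lemma ex_series_rps (F : nat -> nat -> R) N :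
  (forall i, (i < N)%nat -> ex_series (F i)) -> ex_series (fun n => rps (fun i => F i n) N).
Proof. intros H. eexists. apply is_series_rps. intros u Hu. apply Series_correct, H; auto. Qed.

Lemma rps_term_le f N k : (forall j, (j < N)%nat -> 0 <= f j) -> (k < N)%nat -> f k <= rps f N.
Proof. intros H Hk. replace N with (k + S (N - S k))%nat by lia. rewrite rps_add, rps_Sl.
  rewrite Nat.add_0_r. pose proof (rps_nonneg f k (fun j Hj => H j ltac:(lia))).
  pose proof (rps_nonneg (fun j => f (k + S j)%nat) (N - S k) (fun j Hj => H (k + S j)%nat ltac:(lia))). lra. Qed.

Lemma rsum_nonneg f m n : (forall k, (m <= k <= n)%nat -> 0 <= f k) -> 0 <= rsum f m n.
Proof. intros H. rewrite rsum_rps. apply rps_nonneg. intros k Hk. apply H; lia. Qed.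

Lemma ex_series_le_R (f h : nat -> R) : (forall n, 0 <= f n <= h n) -> ex_series h -> ex_series f.
Proof. intros H E. apply (@ex_series_le R_AbsRing R_CompleteNormedModule _ h); auto.
  intros n. change (norm (f n)) with (Rabs (f n)). rewrite Rabs_pos_eq; apply H. Qed.

Lemma model_sum a b (p : nat -> nat -> nat -> R) Q (T : R) :
  (forall n r u, 0 <= p n r u) -> (forall n u, 0 <= Q n u) ->
  (forall n r, ex_series (fun u => p n r (S u))) -> (forall n, ex_series (fun u => Q n (S u))) ->
  is_series (fun n => rsum (fun r => Series (fun u => p n r (S u))) a b + Series (fun u => Q n (S u))) T ->
  (forall r, (a <= r <= b)%nat -> ex_series (fun n => Series (fun u => p n r (S u))) /\ ex_series (fun n => p n r 1%nat)) /\
  ex_series (fun n => Series (fun u => Q n (S u))) /\ ex_series (fun n => Q n 1%nat).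
Proof. intros Hp HQ Ep EQ HT.
  assert (Sp : forall n r, 0 <= Series (fun u => p n r (S u))) by (intros; apply Series_ge0; auto).
  assert (SQ : forall n, 0 <= Series (fun u => Q n (S u))) by (intros; apply Series_ge0; auto).
  assert (ET : ex_series (fun n => rsum (fun r => Series (fun u => p n r (S u))) a b + Series (fun u => Q n (S u)))) by (eexists; eauto).
  assert (A1 : forall r, (a <= r <= b)%nat -> ex_series (fun n => Series (fun u => p n r (S u)))).
  { intros r Hr. eapply ex_series_le_R; [|exact ET]. intros n. { split; [auto|].
    pose proof (SQ n). rewrite rsum_rps.
    pose proof (rps_term_le (fun k => Series (fun u => p n (a + k)%nat (S u))) (S b - a) (r - a) (fun j _ => Sp _ _) ltac:(lia)) as Ht.
    cbv beta in Ht. replace (a + (r - a))%nat with r in Ht by lia. lra. } }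
  assert (A2 : ex_series (fun n => Series (fun u => Q n (S u)))).
  { eapply ex_series_le_R; [|exact ET]. intros n. { split; [auto|].
    assert (0 <= rsum (fun r => Series (fun u => p n r (S u))) a b) by (apply rsum_nonneg; auto). lra. } }
  split; [|split; auto].
  - intros r Hr. split; auto. eapply ex_series_le_R; [|exact (A1 r Hr)]. intros n. split; [auto|].
    apply (term_le_Series (fun u => p n r (S u)) 0); auto.
  - eapply ex_series_le_R; [|exact A2]. intros n. split; [auto|].
    apply (term_le_Series (fun u => Q n (S u)) 0); auto.
Qed.

Lemma cps_comb (f h : nat -> C) (al be : C) N :
  cps (fun k => al * f k + be * h k)%C N = (al * cps f N + be * cps h N)%C.
Proof. rewrite cps_plus, !cps_scal. reflexivity. Qed.

Lemma cps_indic_le (F : nat -> C) n A : (n <= A)%nat ->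
  cps (fun k => F (n + k)%nat) (A - n) = cps (fun i => if Nat.leb n i then F i else RtoC 0) A.
Proof. intros H. replace A with (n + (A - n))%nat at 2 by lia. rewrite cps_add.
  rewrite (cps_ext _ (fun _ => RtoC 0) n). rewrite cps_zero.
  rewrite (cps_ext (fun k => if Nat.leb n (n + k) then F (n + k)%nat else RtoC 0) (fun k => F (n + k)%nat)). ring.
  intros k _. destruct (Nat.leb_spec n (n + k)); auto; lia.
  intros k Hk. destruct (Nat.leb_spec n k); auto; lia. Qed.

Lemma tri_swap (hh q : nat -> R) (X : nat -> C) A :
  cps (fun i => RtoC (rps (fun n => (hh (i - n)%nat * q n)%R) (S i)) * X i)%C A =
  cps (fun n => RtoC (q n) * cps (fun k => RtoC (hh k) * X (n + k)%nat) (A - n))%C A.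
Proof.
  transitivity (cps (fun i => cps (fun n => if Nat.leb n i then RtoC ((hh (i - n)%nat * q n)%R) * X i else RtoC 0)%C A) A).
  - apply cps_ext. intros i Hi.
    rewrite <- (rps_trunc (fun n => hh (i - n)%nat * q n) (S i) A) by lia.
    rewrite RtoC_rps, <- cps_scal_r. apply cps_ext. intros n _.
    destruct (Nat.ltb_spec n (S i)), (Nat.leb_spec n i); try lia; ring.
  - rewrite cps_swap. apply cps_ext. intros n Hn.
    rewrite (cps_ext (fun k => RtoC (hh k) * X (n + k)%nat)%C (fun k => (fun i => RtoC (hh (i - n)%nat) * X i)%C (n + k)%nat))
      by (intros k _; cbv beta; replace (n + k - n)%nat with k by lia; reflexivity).
    rewrite (cps_indic_le (fun i => RtoC (hh (i - n)%nat) * X i)%C n A) by lia. rewrite <- cps_scal. apply cps_ext. intros i _.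
    destruct (Nat.leb_spec n i). replace (n + (i - n))%nat with i by lia. rewrite RtoC_mult. ring. ring.
Qed.

Lemma alg1 (xb Kb Praw SD Db Dfull SDx H CC c PGx : C) :
  Praw = (SD + Kb * Db)%C -> (xb * Db)%C = (Dfull - SDx)%C -> Dfull = (Praw + H * CC + c * PGx)%C ->
  ((xb - Kb) * Praw)%C = (xb * SD + Kb * (H * CC + c * PGx - SDx))%C.
Proof. intros E1 E2 E3.
  transitivity (xb * SD + Kb * (xb * Db) - Kb * Praw)%C. rewrite E1; ring.
  rewrite E2, E3. ring. Qed.

Definition praw a b lam g (p : nat -> nat -> nat -> R) n := rsum (fun r => cv lam g (fun m => p m r 1%nat) n) a b.
Definition qraw lam g (Q : nat -> nat -> R) n := cv lam g (fun m => Q m 1%nat) n.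
Definition PG a (g p0 : nat -> R) n := rsum (fun i => g (n - i)%nat * p0 i) 0 (a - 1).
Definition Dn a b lam delta g p0 p Q n := praw a b lam g p n + qraw lam g Q n + (1 - delta) * lam * PG a g p0 n.
Definition En a b lam delta g p Q n := praw a b lam g p n + delta * qraw lam g Q n.

Lemma cps_one f : cps f 1 = f 0%nat.
Proof. simpl. ring. Qed.

Lemma rsum10 f : rsum f 1 0 = 0.
Proof. rewrite rsum1_rps. reflexivity. Qed.

Lemma cps_indic (F : nat -> C) n N :
  cps (fun i => if Nat.eqb n i then F i else RtoC 0) N = if Nat.ltb n N then F n else RtoC 0.
Proof. induction N; simpl. destruct n; reflexivity.
  rewrite IHN. destruct (Nat.ltb_spec n N), (Nat.eqb_spec n N), (Nat.ltb_spec n (S N)); subst; try lia; ring. Qed.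

Lemma E7_alg lb lam dl (g : nat -> R) (P : nat -> nat -> R) (Qf : nat -> R) a b n :
  lb * (rsum (fun m => P n m) a b + dl * Qf n) + lam * rsum (fun i => g i * (rsum (fun m => P (n - i)%nat m) a b + dl * Qf (n - i)%nat)) 1 n
  = rsum (fun m => lb * P n m + lam * rsum (fun i => g i * P (n - i)%nat m) 1 n) a b + dl * (lb * Qf n + lam * rsum (fun i => g i * Qf (n - i)%nat) 1 n).
Proof. rewrite !rsum1_rps. rewrite !rsum_rps. rewrite rps_plus, rps_scal.
  rewrite (rps_ext (fun k => lam * rsum (fun i => g i * P (n-i)%nat (a+k)%nat) 1 n) (fun k => lam * rps (fun i => g (S i) * P (n - S i)%nat (a+k)%nat) n)) by (intros; rewrite rsum1_rps; auto).
  rewrite (rps_ext (fun k => g (S k) * (rsum (fun m => P (n - S k)%nat m) a b + dl * Qf (n - S k)%nat)) (fun k => rps (fun k0 => g (S k) * P (n - S k)%nat (a + k0)%nat) (S b - a) + dl * (g (S k) * Qf (n - S k)%nat))) by (intros; rewrite rsum_rps, rps_scal; ring).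
  rewrite rps_scal, rps_plus, rps_swap, rps_scal. ring. Qed.

Theorem mainTheorem4 (a b : nat) (lam delta : R) (g : nat -> R)
  (s : nat -> nat -> R) (v : nat -> R)
  (p0 : nat -> R) (p : nat -> nat -> nat -> R) (Q : nat -> nat -> R) :
  (1 <= a)%nat -> (a <= b)%nat ->
  0 < lam < 1 ->
  (delta = 0 \/ delta = 1) ->
  is_pmf1 g ->
  (forall r, (a <= r <= b)%nat -> is_pmf1 (s r)) ->
  is_pmf1 v ->
  (* rho = lam * gbar / (b * mu_b) < 1, with mu_b = 1 / s_b *)
  lam * mean g * mean (s b) / INR b < 1 ->
  stationary a b lam delta g s v p0 p Q ->
  forall x : C, Cmod x <= 1 ->
  Cpow x b <> Kf lam g s b x ->
  pgf (pplus a b lam g p Q) x =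
  (( csum (fun n => RtoC (pplus a b lam g p Q n) * Cpow x n
                     * (Hf lam g v x - 1) * Kf lam g s b x) 0 (a - 1)
   + csum (fun n => RtoC (Qplus a b lam g p Q n) *
        (Cpow x n * (RtoC delta * Hf lam g v x - 1) * Kf lam g s b x
         + Cpow x b * RtoC (1 - delta) *
           csum (fun j => RtoC (e_coef g j n) *
                  (csum (fun i => RtoC (g (i - j)%nat) * Kf lam g s i x) a b
                   + Cser (fun k => RtoC (g (k + (b + 1 - j))%nat) * Cpow x (S k))
                     * Kf lam g s b x)) n (a - 1))) 0 (a - 1)
   + csum (fun n => RtoC (pplus a b lam g p Q n + Qplus a b lam g p Q n) *
        (Cpow x b * Kf lam g s n x - Cpow x n * Kf lam g s b x)) a (b - 1))
   / (Cpow x b - Kf lam g s b x))%C.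
Proof.
  intros Ha Hab Hl Hd Hg Hs Hv Hrho Hst x Hx Hne.
  unfold stationary in Hst. cbv zeta in Hst.
  destruct Hst as (Hp00 & Hp0 & HQ0 & E1 & E2 & E3 & E4 & E5 & E6 & E7 & E8 & Exp & ExQ & HN).
  destruct (model_sum a b p Q _ Hp0 HQ0 Exp ExQ HN) as (Mp & MQs & MQ1).
  set (w := wz lam g x).
  set (D := Dn a b lam delta g p0 p Q).
  set (E := En a b lam delta g p Q).
  assert (Rr : forall r, (a <= r < b)%nat ->
     isC (fun n => RtoC (cv lam g (fun m => p m r 1%nat) n) * Cpow x n)%C (Kf lam g s r x * RtoC (D r))%C).
  { intros r Hr. unfold Kf. fold (wz lam g x).
    apply (recA lam g x (s r) (fun n u => p n r u) (fun n => if Nat.eqb n 0 then D r else 0)); auto.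
    - apply Hs; lia.
    - intros n u Hu. destruct n.
      + simpl. rewrite (E3 r u ltac:(lia) Hu). unfold cv. rewrite rsum10. unfold D, Dn, praw, qraw, cv, PG. ring.
      + rewrite (E4 (S n) r u ltac:(lia) ltac:(lia) Hu). simpl Nat.eqb. unfold cv. ring.
    - apply Mp; lia.
    - eapply isC_ext; [|apply (isC_single 0)]. intros n. destruct n; simpl. apply c_proj_eq; simpl; ring.
      apply c_proj_eq; simpl; ring. }
  assert (Ex_cv : forall f, (forall m, 0 <= f m) -> ex_series f -> ex_series (cv lam g f)) by (intros; apply cv_ex; auto).
  assert (Hg0 : forall n, 0 <= g n) by (destruct Hg as (_ & Hp & _); auto).
  assert (Hdl : 0 <= 1 - delta <= 1) by (destruct Hd; subst; lra).
  assert (D0 : forall n, 0 <= D n).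
  { intros n. unfold D, Dn, praw, qraw, PG.
    assert (0 <= rsum (fun r => cv lam g (fun m => p m r 1%nat) n) a b) by (apply rsum_nonneg; intros; apply cv_nonneg; auto).
    assert (0 <= cv lam g (fun m => Q m 1%nat) n) by (apply cv_nonneg; auto).
    assert (0 <= rsum (fun i => g (n - i)%nat * p0 i) 0 (a - 1)) by (apply rsum_nonneg; intros; apply Rmult_le_pos; auto).
    assert (0 <= (1 - delta) * lam) by nra. nra. }
  assert (DE : ex_series D).
  { unfold D, Dn. apply (ex_series_plus (V := R_NormedModule)). apply (ex_series_plus (V := R_NormedModule)).
    - unfold praw. eapply ex_series_ext; [intros n; symmetry; apply rsum_rps|].
      apply ex_series_rps. intros k Hk. apply Ex_cv; auto. apply Mp; lia.
    - unfold qraw. apply Ex_cv; auto.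
    - apply (ex_series_scal_l (V := R_NormedModule)). unfold PG.
      eapply ex_series_ext; [intros n; symmetry; apply rsum_rps|].
      apply ex_series_rps. intros k Hk. apply ex_series_scal_r.
      apply (proj2 (ex_series_incr_n (V := R_NormedModule) (fun n => g (n - (0 + k))%nat) k)).
      eapply ex_series_ext; [|exists 1; apply Hg]. intros n; simpl. f_equal; lia. }
  set (Db := Cser (fun n => RtoC (D (n + b)%nat) * Cpow x n)%C).
  assert (HDb : isC (fun n => RtoC (D (n + b)%nat) * Cpow x n)%C Db).
  { apply ser_isC; auto. apply (ex_series_ext (V := R_NormedModule) (fun n => D (b + n)%nat)).
    intros n; rewrite Rabs_pos_eq by auto; f_equal; lia. apply (ex_series_incr_n (V := R_NormedModule) D b); auto. }
  assert (Rb : isC (fun n => RtoC (cv lam g (fun m => p m b 1%nat) n) * Cpow x n)%C (Kf lam g s b x * Db)%C).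
  { unfold Kf. fold (wz lam g x).
    apply (recA lam g x (s b) (fun n u => p n b u) (fun n => D (n + b)%nat)); auto.
    - intros n u Hu. destruct n.
      + simpl. rewrite (E3 b u ltac:(lia) Hu). unfold cv. rewrite rsum10. unfold D, Dn, praw, qraw, cv, PG. ring.
      + rewrite (E5 (S n) u ltac:(lia) Hu). unfold cv, D, Dn, praw, qraw, cv, PG. ring.
    - apply Mp; lia. }
  set (CC := cps (fun n => RtoC (E n) * Cpow x n)%C a).
  assert (RQ : isC (fun n => RtoC (qraw lam g Q n) * Cpow x n)%C (Hf lam g v x * CC)%C).
  { unfold Hf. fold (wz lam g x).
    apply (recA lam g x v Q (fun n => if Nat.ltb n a then E n else 0)); auto.
    - intros n u Hu. destruct n.
      + destruct (Nat.ltb_spec 0 a); [|lia]. rewrite (E6 u Hu). unfold cv. rewrite rsum10.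
        unfold E, En, praw, qraw, cv. rewrite rsum10. rewrite !rsum_rps.
        rewrite (rps_ext (fun k => (1 - lam) * p 0%nat (a + k)%nat 1%nat + lam * rsum (fun i => g i * p (0 - i)%nat (a + k)%nat 1%nat) 1 0)
             (fun k => (1 - lam) * p 0%nat (a + k)%nat 1%nat)). rewrite rps_scal. ring.
        intros; rewrite rsum10; ring.
      + destruct (Nat.ltb_spec (S n) a).
        * rewrite (E7 (S n) u ltac:(lia) Hu).
          pose proof (E7_alg (1 - lam) lam delta g (fun k m => p k m 1%nat) (fun k => Q k 1%nat) a b (S n)) as HE7.
          cbv beta in HE7. rewrite HE7. unfold E, En, praw, qraw, cv. ring.
        * rewrite (E8 (S n) u ltac:(lia) Hu). unfold cv. ring.
    - unfold CC. eapply isC_ext; [|apply (isC_cps (fun i n => if Nat.eqb n i then RtoC (E i) * Cpow x i else RtoC 0)%C)].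
      + intros n. cbv beta. rewrite cps_indic. destruct (Nat.ltb n a); [reflexivity|ring].
      + intros i Hi. apply isC_single. }
  set (Praw := (cps (fun k => Kf lam g s (a + k)%nat x * RtoC (D (a + k)%nat)) (b - a) + Kf lam g s b x * Db)%C).
  assert (HP : isC (fun n => RtoC (praw a b lam g p n) * Cpow x n)%C Praw).
  { eapply isC_ext; [|apply isC_plus; [apply (isC_cps (fun k n => RtoC (cv lam g (fun m => p m (a + k)%nat 1%nat) n) * Cpow x n)%C)|exact Rb]].
    - intros n. cbv beta. unfold praw. rewrite rsum_rps. replace (S b - a)%nat with (b - a + 1)%nat by lia.
      rewrite rps_add. simpl rps. replace (a + (b - a + 0))%nat with b by lia.
      rewrite cps_scal_r, <- RtoC_rps. rewrite !RtoC_plus. ring.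
    - intros k Hk. apply Rr. lia. }
  set (G := pgf g x).
  destruct (pgf_isC g x Hg Hx) as (HG & _ & _). fold G in HG.
  assert (Gs : forall i, isC (fun n => RtoC (g (n - i)%nat) * Cpow x n)%C (Cpow x i * G)%C).
  { intros i. assert (Z : cps (fun n => RtoC (g (n - i)%nat) * Cpow x n)%C i = RtoC 0).
    { rewrite (cps_ext _ (fun _ => RtoC 0)). apply cps_zero. intros k Hk.
      replace (k - i)%nat with 0%nat by lia. destruct Hg as (H0 & _). rewrite H0. ring. }
    replace (Cpow x i * G)%C with (Cpow x i * G + cps (fun n => RtoC (g (n - i)%nat) * Cpow x n)%C i)%C by (rewrite Z; ring).
    apply isC_unshift. eapply isC_ext; [|apply (isC_scal (Cpow x i)); exact HG].
    intros n. cbv beta. replace (n + i - i)%nat with n by lia. rewrite Cpow_add_r. ring. }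
  set (PGx := cps (fun i => RtoC (p0 i) * (Cpow x i * G))%C a).
  assert (HPG : isC (fun n => RtoC (PG a g p0 n) * Cpow x n)%C PGx).
  { eapply isC_ext; [|apply (isC_cps (fun i n => RtoC (p0 i) * (RtoC (g (n - i)%nat) * Cpow x n))%C)].
    - intros n. cbv beta. unfold PG. rewrite rsum_rps. replace (S (a - 1) - 0)%nat with a by lia.
      rewrite RtoC_rps, <- cps_scal_r. apply cps_ext. intros k _. simpl. rewrite RtoC_mult. ring.
    - intros i _. apply isC_scal, Gs. }
  set (Dfull := (Praw + Hf lam g v x * CC + RtoC ((1 - delta) * lam) * PGx)%C).
  assert (HDf : isC (fun n => RtoC (D n) * Cpow x n)%C Dfull).
  { eapply isC_ext; [|apply isC_plus; [apply isC_plus; [exact HP|exact RQ]|apply isC_scal; exact HPG]].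
    intros n. cbv beta. unfold D, Dn. rewrite !RtoC_plus, !RtoC_mult. ring. }
  assert (X3 : (Cpow x b * Db)%C = (Dfull - cps (fun n => RtoC (D n) * Cpow x n)%C b)%C).
  { apply (isC_unique (fun k => RtoC (D (k + b)%nat) * Cpow x (k + b))%C).
    - eapply isC_ext; [|apply (isC_scal (Cpow x b)); exact HDb]. intros n. cbv beta. rewrite Cpow_add_r. ring.
    - apply (isC_shift (fun n => RtoC (D n) * Cpow x n)%C). exact HDf. }
  set (T := fun j => Cser (fun k => RtoC (g (k + (b + 1 - j))%nat) * Cpow x (S k))%C).
  assert (X4 : forall j, (j < a)%nat -> (Cpow x b * T j)%C = (Cpow x j * G - cps (fun n => RtoC (g (n - j)%nat) * Cpow x n)%C (S b))%C).
  { intros j Hj.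
    assert (HT : isC (fun k => RtoC (g (k + (b + 1 - j))%nat) * Cpow x (S k))%C (T j)).
    { destruct (ser_isC (fun k => g (k + (b + 1 - j))%nat) x) as [HT _]; auto.
      apply (ex_series_ext (V := R_NormedModule) (fun k => g ((b + 1 - j) + k)%nat)).
      intros k; rewrite Rabs_pos_eq by auto; f_equal; lia.
      apply (ex_series_incr_n (V := R_NormedModule) g). exists 1; apply Hg.
      assert (H1 : isC (fun k => RtoC (g (k + (b + 1 - j))%nat) * Cpow x (S k))%C (x * Cser (fun k => RtoC (g (k + (b + 1 - j))%nat) * Cpow x k))%C).
      { eapply isC_ext; [|apply (isC_scal x); exact HT]. intros k; cbv beta. rewrite Cpow_S. ring. }
      unfold T. rewrite (isC_Cser _ _ H1). exact H1. }
    apply (isC_unique (fun k => RtoC (g (k + S b - j)%nat) * Cpow x (k + S b))%C).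
    - eapply isC_ext; [|apply (isC_scal (Cpow x b)); exact HT]. intros k. cbv beta.
      replace (k + (b + 1 - j))%nat with (k + S b - j)%nat by lia.
      replace (k + S b)%nat with (b + S k)%nat by lia. rewrite Cpow_add_r. ring.
    - eapply isC_ext; [|apply (isC_shift (fun n => RtoC (g (n - j)%nat) * Cpow x n)%C); apply Gs].
      intros k. cbv beta. reflexivity. }
  set (tau0 := tau a b p Q).
  assert (Epp : forall n, pplus a b lam g p Q n = / tau0 * praw a b lam g p n).
  { intros [|n]. unfold pplus, praw, cv. fold tau0. f_equal. rewrite !rsum_rps. apply rps_ext; intros; rewrite rsum10; ring. reflexivity. }
  assert (EQp : forall n, Qplus a b lam g p Q n = / tau0 * qraw lam g Q n).
  { intros [|n]. unfold Qplus, qraw, cv. fold tau0. rewrite rsum10. f_equal; ring. reflexivity. }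
  assert (LHS : pgf (pplus a b lam g p Q) x = (RtoC (/ tau0) * Praw)%C).
  { apply isC_Cser. eapply isC_ext; [|apply isC_scal; exact HP]. intros n; cbv beta. rewrite Epp, RtoC_mult. ring. }
  rewrite LHS.
  set (Kb := Kf lam g s b x). set (HH := Hf lam g v x).
  set (K := fun r => Kf lam g s r x).
  set (Xf := fun j => (cps (fun k => RtoC (g (a + k - j)%nat) * K (a + k)%nat) (S b - a) + T j * Kb)%C).
  set (pr := praw a b lam g p). set (qr := qraw lam g Q).
  set (N1r := cps (fun n => RtoC (pr n) * Cpow x n * (HH - 1) * Kb)%C a).
  set (N2r := cps (fun n => RtoC (qr n) * (Cpow x n * (RtoC delta * HH - 1) * Kb
        + Cpow x b * RtoC (1 - delta) * cps (fun k => RtoC (hh g k) * Xf (n + k)%nat) (a - n)))%C a).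
  set (N3r := cps (fun k => RtoC (pr (a + k)%nat + qr (a + k)%nat) * (Cpow x b * K (a + k)%nat - Cpow x (a + k) * Kb))%C (b - a)).
  match goal with |- _ = ((?N1 + ?N2 + ?N3) / ?den)%C =>
    assert (C1 : N1 = (RtoC (/ tau0) * N1r)%C);
    [|assert (C2 : N2 = (RtoC (/ tau0) * N2r)%C);
    [|assert (C3 : N3 = (RtoC (/ tau0) * N3r)%C)]] end.
  { rewrite csum_cps. replace (S (a - 1) - 0)%nat with a by lia. unfold N1r. rewrite <- cps_scal.
    apply cps_ext. intros n _. simpl (0 + n)%nat. rewrite Epp, RtoC_mult. fold pr. ring. }
  { rewrite csum_cps. replace (S (a - 1) - 0)%nat with a by lia. unfold N2r. rewrite <- cps_scal.
    apply cps_ext. intros n Hn. simpl (0 + n)%nat. rewrite EQp, RtoC_mult. fold qr.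
    rewrite csum_cps. replace (S (a - 1) - n)%nat with (a - n)%nat by lia.
    rewrite (cps_ext _ (fun k => RtoC (hh g k) * Xf (n + k)%nat)%C). ring.
    intros k Hk. rewrite e_coef_hh. replace (n + k - n)%nat with k by lia. unfold Xf, T.
    rewrite csum_cps. reflexivity. }
  { rewrite csum_cps. replace (S (b - 1) - a)%nat with (b - a)%nat by lia. unfold N3r. rewrite <- cps_scal.
    apply cps_ext. intros k _. rewrite Epp, EQp. fold pr qr. rewrite RtoC_plus, !RtoC_mult, RtoC_plus. unfold K. ring. }
  assert (MAIN : ((Cpow x b - Kb) * Praw)%C = (N1r + N2r + N3r)%C).
  { set (SD := cps (fun k => Kf lam g s (a + k)%nat x * RtoC (D (a + k)%nat))%C (b - a)).
    set (SDx := cps (fun n => RtoC (D n) * Cpow x n)%C b).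
    set (c' := RtoC ((1 - delta) * lam)).
    assert (A1 := alg1 (Cpow x b) Kb Praw SD Db Dfull SDx HH CC c' PGx eq_refl X3 eq_refl).
    set (SDlo := cps (fun n => RtoC (D n) * Cpow x n)%C a).
    set (SDhi := cps (fun k => RtoC (D (a + k)%nat) * Cpow x (a + k))%C (b - a)).
    assert (Sx : SDx = (SDlo + SDhi)%C).
    { unfold SDx, SDlo, SDhi. replace b with (a + (b - a))%nat at 1 by lia. apply cps_add. }
    set (R3 := cps (fun k => RtoC (PG a g p0 (a + k)%nat) * (Cpow x b * K (a + k)%nat - Cpow x (a + k) * Kb))%C (b - a)).
    assert (I3 : (Cpow x b * SD - Kb * SDhi)%C = (N3r + c' * R3)%C).
    { unfold SD, SDhi, N3r, R3.
      transitivity (cps (fun k => Cpow x b * (Kf lam g s (a+k)%nat x * RtoC (D (a+k)%nat)) + (- Kb) * (RtoC (D (a+k)%nat) * Cpow x (a+k)))%C (b - a)).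
      { rewrite cps_comb. ring. }
      transitivity (cps (fun k => 1 * (RtoC (pr (a + k)%nat + qr (a + k)%nat) * (Cpow x b * K (a + k)%nat - Cpow x (a + k) * Kb))
           + c' * (RtoC (PG a g p0 (a + k)%nat) * (Cpow x b * K (a + k)%nat - Cpow x (a + k) * Kb)))%C (b - a)).
      2:{ rewrite cps_comb. ring. }
      apply cps_ext. intros k _. unfold D, Dn, c', K. fold pr qr. rewrite !RtoC_plus, !RtoC_mult. ring. }
    set (R1 := cps (fun n => RtoC (PG a g p0 n) * Cpow x n)%C a).
    set (N2a := cps (fun n => RtoC (qr n) * (Cpow x n * (RtoC delta * HH - 1) * Kb))%C a).
    set (NE := cps (fun n => RtoC (qr n) * (Cpow x b * RtoC (1 - delta) * cps (fun k => RtoC (hh g k) * Xf (n + k)%nat) (a - n)))%C a).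
    assert (I2 : N2r = (N2a + NE)%C) by (unfold N2r, N2a, NE; rewrite <- cps_plus; apply cps_ext; intros; ring).
    assert (I1 : (Kb * HH * CC - Kb * SDlo)%C = (N1r + N2a - c' * Kb * R1)%C).
    { unfold CC, SDlo, N1r, N2a, R1.
      transitivity (cps (fun n => (Kb * HH) * (RtoC (E n) * Cpow x n) + (- Kb) * (RtoC (D n) * Cpow x n))%C a).
      { rewrite cps_comb. ring. }
      transitivity (cps (fun n => (1 * (RtoC (pr n) * Cpow x n * (HH - 1) * Kb) + 1 * (RtoC (qr n) * (Cpow x n * (RtoC delta * HH - 1) * Kb)))
            + (- c' * Kb) * (RtoC (PG a g p0 n) * Cpow x n))%C a).
      2:{ rewrite cps_plus, cps_comb, cps_scal. ring. }
      apply cps_ext. intros n _. unfold E, En, D, Dn, c'. fold pr qr. rewrite !RtoC_plus, !RtoC_mult. ring. }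
    assert (Z : (c' * (R3 - Kb * R1 + Kb * PGx))%C = NE).
    { assert (PGe : forall n, RtoC (PG a g p0 n) = cps (fun i => RtoC (p0 i) * RtoC (g (n - i)%nat))%C a).
      { intros n. unfold PG. rewrite rsum_rps. replace (S (a-1) - 0)%nat with a by lia. rewrite RtoC_rps.
        apply cps_ext. intros i _. simpl (0+i)%nat. rewrite RtoC_mult. ring. }
      set (Y := fun k => (Cpow x b * K (a + k)%nat - Cpow x (a + k) * Kb)%C).
      assert (R3e : R3 = cps (fun i => RtoC (p0 i) * cps (fun k => RtoC (g (a + k - i)%nat) * Y k) (b - a))%C a).
      { unfold R3. fold Y. rewrite (cps_ext _ (fun k => cps (fun i => RtoC (p0 i) * (RtoC (g (a + k - i)%nat) * Y k)) a)%C).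
        rewrite cps_swap. apply cps_ext; intros; rewrite cps_scal; auto.
        intros k _. rewrite PGe, <- cps_scal_r. apply cps_ext; intros; unfold Y; ring. }
      assert (R1e : R1 = cps (fun i => RtoC (p0 i) * cps (fun n => RtoC (g (n - i)%nat) * Cpow x n) a)%C a).
      { unfold R1. rewrite (cps_ext _ (fun n => cps (fun i => RtoC (p0 i) * (RtoC (g (n - i)%nat) * Cpow x n)) a)%C).
        rewrite cps_swap. apply cps_ext; intros; rewrite cps_scal; auto.
        intros n _. rewrite PGe, <- cps_scal_r. apply cps_ext; intros; ring. }
      assert (W : (R3 - Kb * R1 + Kb * PGx)%C = cps (fun i => RtoC (p0 i) * (Cpow x b * Xf i))%C a).
      { rewrite R3e, R1e. unfold PGx.
        transitivity (cps (fun i => (1 * (RtoC (p0 i) * cps (fun k => RtoC (g (a + k - i)%nat) * Y k) (b - a))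
            + (- Kb) * (RtoC (p0 i) * cps (fun n => RtoC (g (n - i)%nat) * Cpow x n) a))
            + Kb * (RtoC (p0 i) * (Cpow x i * G)))%C a).
        { rewrite cps_plus, cps_comb, cps_scal. ring. }
        apply cps_ext. intros i Hi.
        assert (Pi : (Cpow x b * Xf i)%C = (Cpow x b * cps (fun k => RtoC (g (a + k - i)%nat) * K (a + k)%nat) (S b - a) + Kb * (Cpow x b * T i))%C)
          by (unfold Xf; ring).
        rewrite Pi, X4 by lia.
        replace (S b - a)%nat with (b - a + 1)%nat by lia. rewrite cps_add, cps_one.
        replace (S b) with (a + (b - a + 1))%nat by lia. rewrite !cps_add, cps_one. cbv beta.
        replace (a + (b - a + 0))%nat with b by lia.
        rewrite (cps_ext (fun k => RtoC (g (a + k - i)%nat) * Y k)%C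
                  (fun k => Cpow x b * (RtoC (g (a + k - i)%nat) * K (a + k)%nat) + (- Kb) * (RtoC (g (a + k - i)%nat) * Cpow x (a + k)))%C)
          by (intros; unfold Y; ring).
        rewrite cps_comb. unfold K. fold Kb. ring. }
      rewrite W. destruct Hd as [Hd0|Hd1].
      - assert (Ren : forall i, (i < a)%nat -> lam * p0 i = rps (fun n => (hh g (i - n)%nat * qr n)%R) (S i)).
        { apply (renewal_inv g (fun i => lam * p0 i) qr a).
          intros j Hj. destruct j.
          - simpl. unfold qr, qraw, cv. rewrite rsum10. rewrite Hd0 in E1. nra.
          - assert (RR : rps (fun i => g (S i) * (lam * p0 (S j - S i)%nat)) (S j) = lam * rsum (fun i => g i * p0 (S j - i)%nat) 1 (S j)).
            { rewrite rsum1_rps, <- rps_scal. apply rps_ext. intros; ring. }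
            rewrite RR. unfold qr, qraw, cv.
            pose proof (E2 (S j) ltac:(lia)) as HE. rewrite Hd0 in HE. nra. }
        unfold c', NE. rewrite Hd0.
        transitivity (Cpow x b * cps (fun i => RtoC (rps (fun n => (hh g (i - n)%nat * qr n)%R) (S i)) * Xf i) a)%C.
        + rewrite <- cps_scal, <- cps_scal. apply cps_ext. intros i Hi. rewrite <- Ren by auto.
          replace ((1 - 0) * lam) with lam by ring. rewrite !RtoC_mult. ring.
        + rewrite tri_swap, <- cps_scal. apply cps_ext. intros n _. replace (1 - 0) with 1 by ring. ring.
      - unfold c', NE. rewrite Hd1. replace (1 - 1) with 0 by ring.
        replace (0 * lam) with 0 by ring.
        transitivity (RtoC 0). ring. symmetry. etransitivity; [apply (cps_ext _ (fun _ => RtoC 0)); intros; ring | apply cps_zero]. }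
    rewrite A1, Sx, I2, <- Z.
    replace (Cpow x b * SD)%C with (N3r + c' * R3 + Kb * SDhi)%C by (rewrite <- I3; ring).
    replace (Kb * (HH * CC + c' * PGx - (SDlo + SDhi)))%C with (Kb * HH * CC - Kb * SDlo + Kb * c' * PGx - Kb * SDhi)%C by ring.
    rewrite I1. ring. }
  rewrite C1, C2, C3.
  assert (Hden : (Cpow x b - Kb)%C <> RtoC 0).
  { intros Hc. apply Hne. fold Kb. replace (Cpow x b) with ((Cpow x b - Kb) + Kb)%C by ring. rewrite Hc. ring. }
  replace (RtoC (/ tau0) * N1r + RtoC (/ tau0) * N2r + RtoC (/ tau0) * N3r)%C
    with (RtoC (/ tau0) * ((Cpow x b - Kb) * Praw))%C by (rewrite MAIN; ring).
  field. auto.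
Qed.
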